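(* Let $\mathcal{P}$ be a profile of unrooted phylogenetic trees whose display graph $G(\mathcal{P})$ is connected. Let $T\in\mathcal{P}$ and suppose $F$ is a minimal cut of $G(\mathcal{P})$ that contains exactly one edge $e$ of $T$. Then the edges of the two subtrees of $T-e$ lie in different connected components of $G(\mathcal{P})-F$ (i.e., no edge of one subtree lies in the same component as an edge of the other subtree).
   Context: A phylogenetic tree is an unrooted tree whose leaves are bijectively labeled (leaves identified with labels; internal vertices have degree at least three). A profile $\mathcal{P}=\{T_1,\dots,T_k\}$ is a finite collection of phylogenetic trees; internal vertices of distinct trees are disjoint, while leaves with the same label are the same vertex. The display graph $G(\mathcal{P})$ has vertex set $\bigcup_i V(T_i)$ and edge set $\bigcup_i E(T_i)$. A cut of a connected graph $G$ is $F\subseteq E(G)$ with $G-F$ (same vertices, edges of $F$ removed) disconnected; it is minimal if no proper subset is a cut. *)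

(* Defs.v *)
From mathcomp Require Import all_boot.
Set Implicit Arguments. Unset Strict Implicit. Unset Printing Implicit Defensive.

Section Graphs.
Variable V : finType.

Definition adj (Es : {set {set V}}) : rel V := fun x y => [set x; y] \in Es.

Definition is_graph (Vs : {set V}) (Es : {set {set V}}) : Prop :=
  forall e, e \in Es -> e \subset Vs /\ #|e| = 2.

Definition connected_graph (Vs : {set V}) (Es : {set {set V}}) : Prop :=
  Vs != set0 /\ forall x y, x \in Vs -> y \in Vs -> connect (adj Es) x y.

Definition acyclic (Es : {set {set V}}) : Prop :=
  forall p : seq V, uniq p -> 2 < size p -> ~~ cycle (adj Es) p.

Definition is_tree (Vs : {set V}) (Es : {set {set V}}) : Prop :=
  [/\ is_graph Vs Es, connected_graph Vs Es & acyclic Es].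

Definition degree (Es : {set {set V}}) (x : V) : nat := #|[set e in Es | x \in e]|.

(* leaves of a tree: vertices of degree at most 1 (degree 0 only for the one-vertex tree) *)
Definition leaves (Vs : {set V}) (Es : {set {set V}}) : {set V} :=
  [set x in Vs | degree Es x <= 1].

(* phylogenetic tree: a tree whose internal (non-leaf) vertices have degree >= 3;
   leaves are identified with their labels (they are vertices of V). *)
Definition phylo_tree (Vs : {set V}) (Es : {set {set V}}) : Prop :=
  is_tree Vs Es /\ forall x, x \in Vs -> 1 < degree Es x -> 2 < degree Es x.

(* profile indexed by a finite type I: tree i has vertices VT i and edges ET i;
   distinct trees share only vertices that are leaves in both (same label = same vertex),
   internal vertices of distinct trees are disjoint. *)
Definition profile (I : finType) (VT : I -> {set V}) (ET : I -> {set {set V}}) : Prop :=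
  (forall i, phylo_tree (VT i) (ET i)) /\
  (forall i j, i != j -> VT i :&: VT j \subset leaves (VT i) (ET i) :&: leaves (VT j) (ET j)).

Definition dgV (I : finType) (VT : I -> {set V}) : {set V} := \bigcup_(i : I) VT i.
Definition dgE (I : finType) (ET : I -> {set {set V}}) : {set {set V}} := \bigcup_(i : I) ET i.

Definition is_cut (Vs : {set V}) (Es : {set {set V}}) (F : {set {set V}}) : Prop :=
  F \subset Es /\ ~ connected_graph Vs (Es :\: F).

Definition minimal_cut (Vs : {set V}) (Es : {set {set V}}) (F : {set {set V}}) : Prop :=
  is_cut Vs Es F /\ forall F' : {set {set V}}, F' \proper F -> ~ is_cut Vs Es F'.

End Graphs.

(* Main.v *)
Require Import Defs.
From mathcomp Require Import all_boot.
From Stdlib Require Import Classical.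

Lemma adj_sym (V : finType) (Es : {set {set V}}) : symmetric (adj Es).
Proof. by move=> x y; rewrite /adj setUC. Qed.

Theorem lemma7 (V I : finType) (VT : I -> {set V}) (ET : I -> {set {set V}})
  (F : {set {set V}}) (i : I) (u v : V) :
  profile VT ET ->
  connected_graph (dgV VT) (dgE ET) ->
  minimal_cut (dgV VT) (dgE ET) F ->
  F :&: ET i = [set [set u; v]] ->
  forall f1 f2 x1 x2,
    f1 \in ET i :\ [set u; v] -> f2 \in ET i :\ [set u; v] ->
    (* f1 lies in the subtree of T - e containing u, f2 in the one containing v *)
    (forall y, y \in f1 -> connect (adj (ET i :\ [set u; v])) u y) ->
    (forall y, y \in f2 -> connect (adj (ET i :\ [set u; v])) v y) ->
    x1 \in f1 -> x2 \in f2 ->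
    ~~ connect (adj (dgE ET :\: F)) x1 x2.
Proof.
move=> _ _ [[sFE ncut] minF] hFi f1 f2 x1 x2 _ _ h1 h2 x1f x2f.
set e := [set u; v].
have eF : e \in F by have := set11 e; rewrite -hFi => /setIP [].
have csym := @sym_connect_sym _ _ (@adj_sym V (dgE ET :\: F)).
have sub : forall a b, connect (adj (ET i :\ e)) a b ->
    connect (adj (dgE ET :\: F)) a b.
  apply: connect_sub => a b; rewrite /adj => /setD1P [ne hi].
  apply: connect1; rewrite inE; apply/andP; split.
    apply/negP => hF; move/negP: ne; apply; apply/eqP/set1P.
    by rewrite -hFi; apply/setIP.
  by apply/bigcupP; exists i.
have cu := sub _ _ (h1 _ x1f).
have cv := sub _ _ (h2 _ x2f).
apply/negP => c12.
have cuv : connect (adj (dgE ET :\: F)) u v.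
  apply: connect_trans cu (connect_trans c12 _); by rewrite csym.
apply: ncut.
have prop : F :\ e \proper F by rewrite properD1.
have notcut := minF _ prop.
have conn : connected_graph (dgV VT) (dgE ET :\: (F :\ e)).
  apply: NNPP => nc; apply: notcut; split => //.
  by apply: subset_trans (subsetDl _ _) sFE.
case: conn => ne hc; split => // x y xV yV.
have := hc x y xV yV; apply: connect_sub => a b; rewrite /adj => hab.
have [abe|abne] := eqVneq [set a; b] e.
  have ha : a \in e by rewrite -abe set21.
  have hb : b \in e by rewrite -abe set22.
  move: ha hb; rewrite !inE => /orP [] /eqP -> /orP [] /eqP -> //;
    by rewrite ?connect0 // csym.
apply: connect1; move: hab; rewrite !inE => /andP [H1 H2]; rewrite H2 andbT.
by move: H1; rewrite abne.
Qed.
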